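(* Let $r\in(1,2)$ and let $c_r$ be a constant such that $|e^{-x}-1+x|\le c_r|x|^r$ for all $x>0$. Let $Z$ be a nonnegative real random variable with $\mathbb{E}[Z^r]<+\infty$, and let $k_Z(\xi)=\log\mathbb{E}[e^{-\xi Z}]$. Then for $0\le\xi\le(2\mathbb{E}[Z])^{-1}$, $$|k_Z(\xi)+\xi\mathbb{E}[Z]|\le c_r\xi^r\mathbb{E}[Z^r]+\xi^2(\mathbb{E}[Z])^2.$$ Moreover $$\sup_{\xi>0}\frac{|k_Z(\xi)|^r}{|\xi|^r}=\mathbb{E}[Z]^r.$$ *)

(* Defs.v *)
From HB Require Import structures.
From mathcomp Require Import all_boot all_order all_algebra.
From mathcomp Require Import all_classical all_reals all_analysis.
Set Implicit Arguments. Unset Strict Implicit. Unset Printing Implicit Defensive.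
Import Order.TTheory GRing.Theory Num.Theory.
Local Open Scope ring_scope.

(* Log-Laplace transform k_Z(xi) = log E[exp(-xi Z)] of a random variable Z
   on the probability space P (the expectation is finite for Z >= 0, xi >= 0). *)
Definition kZ d (T : measurableType d) (R : realType) (P : probability T R)
  (Z : T -> R) (xi : R) : R :=
  ln (fine ('E_P[fun w => expR (- (xi * Z w))])%E).

(* Main.v *)
Require Import Defs.
From HB Require Import structures.
From mathcomp Require Import all_boot all_order all_algebra.
From mathcomp Require Import all_classical all_reals all_analysis.
From mathcomp Require Import ring lra measurable_realfun.
Import Order.TTheory GRing.Theory Num.Theory.
Local Open Scope ring_scope.
Local Open Scope classical_set_scope.

Lemma Zle (R : realType) (r z : R) : 1 < r -> 0 <= z -> z <= 1 + z `^ r.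
Proof.
move=> r1 z0; have [z1|z1] := leP z 1.
  by apply: (le_trans z1); rewrite lerDl powR_ge0.
apply: (@le_trans _ _ (z `^ r)); last by rewrite lerDr.
rewrite -{1}(powRr1 z0) ler_powR //; [exact: ltW | exact: ltW].
Qed.

Lemma EZfin d (T : measurableType d) (R : realType) (P : probability T R) (r : R) (Z : T -> R) :
  1 < r -> measurable_fun setT Z -> (forall w, 0 <= Z w) ->
  ('E_P[fun w => (Z w `^ r)%R] < +oo)%E ->
  ('E_P[Z] \is a fin_num)%E /\ ('E_P[fun w => (Z w `^ r)%R] \is a fin_num)%E.
Proof.
move=> r1 mZ Z0 Mfin.
have mZr : measurable_fun setT (fun w => Z w `^ r).
  exact: (measurableT_comp (measurable_powR r) mZ).
have M0 : (0 <= 'E_P[fun w => (Z w `^ r)%R])%E.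
  by apply: expectation_ge0 => w; exact: powR_ge0.
have m0 : (0 <= 'E_P[Z])%E by exact: expectation_ge0.
split; last by rewrite ge0_fin_numE.
rewrite ge0_fin_numE //.
suff H : ('E_P[Z] <= 1 + 'E_P[fun w => (Z w `^ r)%R])%E.
  by apply: (le_lt_trans H); rewrite lte_add_pinfty ?ltry.
rewrite unlock.
rewrite -[X in (X + _)%E](probability_setT P) -[X in (X + _)%E]mul1e.
rewrite -integral_cst //.
rewrite -ge0_integralD //=; last 2 first.
- by move=> x _; rewrite lee_fin powR_ge0.
- exact/measurable_EFinP.
apply: ge0_le_integral => //. all: try (move=> x _; rewrite ?adde_ge0 // lee_fin ?powR_ge0 //).
- exact/measurable_EFinP.
- apply: emeasurable_funD; [exact: measurable_cst | exact/measurable_EFinP].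
- exact: Zle.
Qed.
Lemma EaddZ d (T : measurableType d) (R : realType) (P : probability T R) (f g : T -> R) (k : R) :
  measurable_fun setT f -> measurable_fun setT g -> (forall w, 0 <= f w) -> (forall w, 0 <= g w) ->
  0 <= k -> ('E_P[fun w => (f w + k * g w)%R] = 'E_P[f] + k%:E * 'E_P[g])%E.
Proof.
move=> mf mg f0 g0 k0; rewrite unlock.
under eq_integral do rewrite EFinD EFinM.
rewrite ge0_integralD //; last 4 first.
- by move=> x _; rewrite lee_fin.
- exact/measurable_EFinP.
- by move=> x _; rewrite lee_fin mulr_ge0.
- by apply/measurable_EFinP; apply: measurable_funM.
by rewrite ge0_integralZl //; [exact/measurable_EFinP | move=> x _; rewrite lee_fin].
Qed.

Lemma Ele d (T : measurableType d) (R : realType) (P : probability T R) (f g : T -> R) :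
  measurable_fun setT f -> measurable_fun setT g -> (forall w, 0 <= f w) ->
  (forall w, f w <= g w) -> ('E_P[f] <= 'E_P[g])%E.
Proof.
move=> mf mg f0 fg; rewrite unlock; apply: ge0_le_integral => //.
all: try (by move=> x _; rewrite lee_fin ?(le_trans (f0 x))).
all: exact/measurable_EFinP.
Qed.

Lemma Ecst d (T : measurableType d) (R : realType) (P : probability T R) (k : R) :
  'E_P[fun _ => k]%E = k%:E.
Proof. exact: expectation_cst. Qed.

Lemma core d (T : measurableType d) (R : realType) (P : probability T R) (r c : R) (Z : T -> R) (xi : R) :
  1 < r ->
  (forall x : R, 0 < x -> `|expR (- x) - 1 + x| <= c * `|x| `^ r) ->
  measurable_fun setT Z ->
  (forall w, 0 <= Z w) ->
  ('E_P[fun w => (Z w `^ r)%R] < +oo)%E -> 0 <= xi ->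
  let m := fine 'E_P[Z] in let M := fine 'E_P[fun w => (Z w `^ r)%R] in
  let L := fine 'E_P[fun w => expR (- (xi * Z w))] in
  [/\ expR (- (xi * m)) <= L, L <= 1 & L <= 1 - xi * m + c * xi `^ r * M].
Proof.
move=> r1 hc mZ Z0 Mfin xi0 m M L.
have [mfin Mfin'] := @EZfin _ _ _ P _ _ r1 mZ Z0 Mfin.
have c0 : 0 <= c.
  have := hc 1 ltr01; rewrite normr1 powR1 mulr1 => H; apply: le_trans H.
  exact: normr_ge0.
have mZr : measurable_fun setT (fun w => Z w `^ r).
  exact: (measurableT_comp (measurable_powR r) mZ).
have me : measurable_fun setT (fun w => expR (- (xi * Z w))).
  apply: measurableT_comp; first exact: measurable_expR. apply: measurable_funN. exact: measurable_funM.
have e0 w : 0 <= expR (- (xi * Z w)) by exact/ltW/expR_gt0.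
have e1 : ('E_P[fun w => expR (- (xi * Z w))] <= 1)%E.
  rewrite -(@Ecst _ _ _ P 1); apply: Ele; [exact: me | exact: measurable_cst | exact: e0 | move=> w].
  by rewrite /= expR_le1 oppr_le0 mulr_ge0.
have Lfin : ('E_P[fun w => expR (- (xi * Z w))] \is a fin_num)%E.
  by rewrite ge0_fin_numE ?(le_lt_trans e1) ?ltry //; exact: expectation_ge0.
have Em : ('E_P[Z] = m%:E)%E by rewrite fineK.
have EM : ('E_P[fun w => (Z w `^ r)%R] = M%:E)%E by rewrite fineK.
have EL : ('E_P[fun w => expR (- (xi * Z w))] = L%:E)%E by rewrite fineK.
split.
- (* Jensen *)
  set a := expR (- (xi * m)).
  have a0 : 0 < a by exact: expR_gt0.
  have H : ('E_P[fun _ => (a * (1 + xi * m))%R] <= 'E_P[fun w => (expR (- (xi * Z w)) + (a * xi) * Z w)%R])%E.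
    apply: Ele => //.
    - apply: measurable_funD => //; exact: measurable_funM.
    - move=> w /=; apply: mulr_ge0; [exact: ltW | apply: addr_ge0 => //; apply: mulr_ge0 => //; exact: fine_ge0 (expectation_ge0 _ Z0)].
    - move=> w.
      have := expR_ge1Dx (- (xi * Z w) + xi * m).
      move=> H.
      have E : a * expR (- (xi * Z w) + xi * m) = expR (- (xi * Z w)).
        by rewrite /a -expRD; congr expR; ring.
      have := ler_wpM2l (ltW a0) H; rewrite E /=.
      nra.
  rewrite Ecst EaddZ // in H; last by rewrite mulr_ge0 // ltW.
  rewrite Em EL -EFinM -EFinD lee_fin in H.
  rewrite /m; nra.
- by rewrite -lee_fin -EL.
- have H : ('E_P[fun w => (expR (- (xi * Z w)) + xi * Z w)%R] <= 'E_P[fun w => (1 + (c * xi `^ r) * Z w `^ r)%R])%E.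
    apply: Ele.
    - apply: measurable_funD => //; exact: measurable_funM.
    - apply: measurable_funD; first exact: measurable_cst. exact: measurable_funM.
    - by move=> w; rewrite addr_ge0 // mulr_ge0.
    - move=> w; have [xz|xz] := ltP 0 (xi * Z w); last first.
        have xz0 : xi * Z w = 0 by apply: le_anti; rewrite xz mulr_ge0.
        by rewrite xz0 oppr0 expR0 addr0 lerDl ?mulr_ge0 ?powR_ge0.
      have := hc _ xz; rewrite (ger0_norm (ltW xz)) powRM // => H.
      have := ler_norm (expR (- (xi * Z w)) - 1 + xi * Z w); rewrite !mulrA in H *; lra.
  rewrite !EaddZ // in H. all: try (by rewrite ?mulr_ge0 // powR_ge0). all: try (by move=> w; rewrite powR_ge0).
  rewrite Ecst Em EL EM -!EFinM -!EFinD lee_fin in H.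
  lra.
Qed.

Lemma kbounds d (T : measurableType d) (R : realType) (P : probability T R) (r c : R) (Z : T -> R) (xi : R) :
  1 < r ->
  (forall x : R, 0 < x -> `|expR (- x) - 1 + x| <= c * `|x| `^ r) ->
  measurable_fun setT Z ->
  (forall w, 0 <= Z w) ->
  ('E_P[fun w => (Z w `^ r)%R] < +oo)%E -> 0 <= xi ->
  let m := fine 'E_P[Z] in let M := fine 'E_P[fun w => (Z w `^ r)%R] in
  [/\ - (xi * m) <= kZ P Z xi, kZ P Z xi <= 0 & kZ P Z xi <= - (xi * m) + c * xi `^ r * M].
Proof.
move=> r1 hc mZ Z0 Mfin xi0 m M.
have [J B U] := @core _ _ _ P _ _ _ xi r1 hc mZ Z0 Mfin xi0.
set L := fine ('E_P[fun w => expR (- (xi * Z w))])%E in J B U.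
have L0 : 0 < L by apply: lt_le_trans J; exact: expR_gt0.
have kE : kZ P Z xi = ln L by [].
rewrite kE; split.
- by rewrite -[X in X <= _]expRK ler_ln // ?posrE expR_gt0.
- exact: ln_le0.
- have := expR_ge1Dx (ln L); rewrite lnK ?posrE //. rewrite -/m -/M in U. lra.
Qed.

Theorem lemmaA3 (d : measure_display) (T : measurableType d) (R : realType)
  (P : probability T R) (r c : R) (Z : T -> R) :
  1 < r < 2 ->
  (forall x : R, 0 < x -> `|expR (- x) - 1 + x| <= c * `|x| `^ r) ->
  measurable_fun setT Z ->
  (forall w, 0 <= Z w) ->
  ('E_P[fun w => (Z w `^ r)%R] < +oo)%E ->
  (forall xi : R, 0 <= xi -> 2 * fine 'E_P[Z] * xi <= 1 ->
     `|kZ P Z xi + xi * fine 'E_P[Z]|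
       <= c * xi `^ r * fine 'E_P[fun w => (Z w `^ r)%R]
          + xi ^+ 2 * (fine 'E_P[Z]) ^+ 2)
  /\
  ereal_sup [set ((`|kZ P Z xi| `^ r) / (`|xi| `^ r))%:E | xi in `]0, +oo[]
    = ((fine 'E_P[Z]) `^ r)%:E.
Proof.
move=> /andP[r1 r2] hc mZ Z0 Mfin.
have kb := @kbounds _ _ _ P _ _ Z _ r1 hc mZ Z0 Mfin.
set m := fine 'E_P[Z]; set M := fine 'E_P[fun w => (Z w `^ r)%R].
have m0 : 0 <= m by apply: fine_ge0; exact: expectation_ge0.
have M0 : 0 <= M by apply: fine_ge0; apply: expectation_ge0 => w; exact: powR_ge0.
have c0 : 0 <= c.
  have := hc 1 ltr01; rewrite normr1 powR1 mulr1 => H; apply: le_trans H.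
  exact: normr_ge0.
have r0 : 0 < r by apply: lt_trans r1.
split.
  move=> xi xi0 _; have [k1 k2 k3] := kb xi xi0.
  rewrite -/m -/M in k1 k2 k3.
  rewrite ger0_norm; last by lra.
  have : 0 <= xi ^+ 2 * m ^+ 2 by rewrite mulr_ge0 // exprn_ge0.
  lra.
have ratio_le xi : 0 < xi -> `|kZ P Z xi| `^ r / `|xi| `^ r <= m `^ r.
  move=> xi0; have [k1 k2 k3] := kb xi (ltW xi0).
  rewrite -/m -/M in k1 k2 k3.
  rewrite (ger0_norm (ltW xi0)) ler_pdivrMr ?powR_gt0 // -powRM //.
  rewrite mulrC; apply: ge0_ler_powR; rewrite ?nnegrE ?normr_ge0 ?mulr_ge0 //; [exact: ltW | exact: ltW | ].
  by rewrite ler0_norm //; lra.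
  exact: ltW.
apply: le_anti; apply/andP; split.
  apply: ge_ereal_sup => y [xi xi0 <-]; rewrite lee_fin; apply: ratio_le.
  by move: xi0; rewrite /= in_itv /= andbT.
set S := ereal_sup _.
have S0 : (0 <= S)%E.
  apply: le_ereal_sup_tmp; exists ((`|kZ P Z 1| `^ r) / (`|1| `^ r))%:E.
    by exists 1 => //; rewrite /= in_itv /= andbT ltr01.
  by rewrite lee_fin divr_ge0 // powR_ge0.
rewrite leNgt; apply/negP => Slt.
have Sfin : S \is a fin_num by rewrite ge0_fin_numE // (lt_le_trans Slt) ?leey.
set s := fine S.
have s0 : 0 <= s by exact: fine_ge0.
have sm : s < m `^ r by rewrite -lte_fin /s fineK.
set q := s `^ r^-1.
have q0 : 0 <= q by exact: powR_ge0.
have qr : q `^ r = s by rewrite /q -powRrM mulVf ?gt_eqF // powRr1.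
have qm : q < m.
  rewrite ltNge; apply/negP => mq.
  have := ge0_ler_powR (ltW r0) m0 q0 mq; rewrite qr; lra.
set e := m - q.
have e0 : 0 < e by rewrite /e subr_gt0.
set t := e / (c * M + 1).
have cM0 : 0 <= c * M by exact: mulr_ge0.
have t0 : 0 < t by rewrite /t divr_gt0 //; lra.
have cMt : c * M * t < e.
  rewrite /t mulrA ltr_pdivrMr; last lra.
  nra.
set xi := t `^ (r - 1)^-1.
have r10 : 0 < r - 1 by lra.
have xi0 : 0 < xi by exact: powR_gt0.
have xit : xi `^ (r - 1) = t by rewrite /xi -powRrM mulVf ?gt_eqF // powRr1 // ltW.
have xir : xi `^ r = xi * t by rewrite -xit mulr_powRB1 // ltW.
have [k1 k2 k3] := kb xi (ltW xi0).
rewrite -/m -/M xir in k1 k2 k3.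
have kq : xi * q < `|kZ P Z xi|.
  rewrite ler0_norm //.
  have : xi * (c * M * t) < xi * e by rewrite ltr_pM2l.
  rewrite /e; nra.
have : s < `|kZ P Z xi| `^ r / `|xi| `^ r.
  rewrite (ger0_norm (ltW xi0)) ltr_pdivlMr ?powR_gt0 // -qr -powRM // ?ltW //.
  rewrite mulrC; apply: gt0_ltr_powR; rewrite ?nnegrE ?normr_ge0 ?mulr_ge0 //; exact: ltW.
apply/negP; rewrite -leNgt -lee_fin /s fineK //.
apply: ereal_sup_ubound; exists xi => //.
by rewrite /= in_itv /= andbT.
Qed.
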